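(* Let $G$ be a non-trivial finite abelian group with $G\not\simeq C_2^2$ and let $f$ be an automorphism of $\mathcal{P}_0(G)$ with trivial pullback. Suppose that the following two conditions hold: (A) for every proper subgroup $H$ of $G$, the restriction of $f$ to $\mathcal{P}_{0}(H)$ is the identity; (B) for every subgroup $H$ of $G$ that is cyclic of prime order, the induced automorphism $f_{G/H}$ of $\mathcal{P}_0(G/H)$ is the identity. Then $f$ is the identity.
   Context: For an additively written finite abelian group $G$, $\mathcal{P}_{0}(G)$ is the monoid of all subsets of $G$ containing $0$, with setwise addition and identity $\{0\}$. An automorphism $f$ of $\mathcal{P}_0(G)$ has trivial pullback if $f(\{0,a\})=\{0,a\}$ for all $a\in G$. For a subgroup $H$, let $\mathcal{P}_{0,H}(G)=\{H+X:X\in\mathcal{P}_0(G)\}$, a monoid with identity $H$, and let $\varphi_H:\mathcal{P}_{0,H}(G)\to\mathcal{P}_0(G/H)$, $H+X\mapsto\{a+H:a\in X\}$, which is a monoid isomorphism. If $f$ has trivial pullback, then $f(H)=H$ and $f$ maps $\mathcal{P}_{0,H}(G)$ onto itself; the induced automorphism is $f_{G/H}=\varphi_H\circ f|_{\mathcal{P}_{0,H}(G)}\circ\varphi_H^{-1}$. Restriction of $f$ to $\mathcal{P}_0(H)$ makes sense since $f$ maps $\mathcal{P}_0(H)$ onto itself for such $f$. $C_2^2$ is the Klein four-group. *)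

(* Defs.v *)
(* A finite abelian group G is written multiplicatively as a
   group G : {group gT} with abelian G; identity 1, setwise product A * B. *)
From mathcomp Require Import all_boot all_fingroup all_solvable.
From mathcomp Require Import zmodp.
Set Implicit Arguments. Unset Strict Implicit. Unset Printing Implicit Defensive.
Local Open Scope group_scope.

Section P0.
Variable gT : finGroupType.

Definition P0 (G : {set gT}) : pred {set gT} :=
  [pred A : {set gT} | (A \subset G) && (1 \in A)].

(* f is a monoid automorphism of P_0(G) (values of f outside P_0(G) irrelevant). *)
Definition P0_aut (G : {set gT}) (f : {set gT} -> {set gT}) : Prop :=
  [/\ {in P0 G, forall A, f A \in P0 G},
      {in P0 G &, injective f},
      {in P0 G, forall B, exists2 A, A \in P0 G & f A = B},
      {in P0 G &, forall A B, f (A * B) = f A * f B}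
    & f 1 = 1].

Definition trivial_pullback (G : {set gT}) (f : {set gT} -> {set gT}) : Prop :=
  forall a, a \in G -> f [set 1; a] = [set 1; a].

(* induced automorphism f_{G/H} = phi_H o f o phi_H^{-1}, where
   phi_H(H X) = {xH : x in X} and phi_H^{-1}(B) = union of the cosets in B
   (inside G). *)
Definition induced (G H : {set gT}) (f : {set gT} -> {set gT})
  (B : {set coset_of H}) : {set coset_of H} :=
  coset H @: f (G :&: coset H @^-1: B).

End P0.
Arguments induced {gT} G H f B.

(* Main.v *)
Require Import Defs.
From mathcomp Require Import all_boot all_fingroup all_solvable.
From mathcomp Require Import zmodp.
Local Open Scope group_scope.
Set Implicit Arguments. Unset Strict Implicit.

Lemma mulP2 (gT : finGroupType) (X : {set gT}) x z :
  (z \in X * [set 1; x]) = (z \in X) || (z * x^-1 \in X).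
Proof.
apply/mulsgP/orP => [[a y ha] | [hz|hz]].
  by rewrite !inE => /orP [] /eqP -> ->; [left; rewrite mulg1 | right; rewrite mulgK].
  by exists z 1; rewrite ?mulg1 // !inE eqxx.
by exists (z * x^-1) x; rewrite ?mulgVK // !inE eqxx orbT.
Qed.

Lemma P0E (gT : finGroupType) (G A : {set gT}) :
  (A \in P0 G) = (A \subset G) && (1 \in A).
Proof. by []. Qed.

Lemma pairP0 (gT : finGroupType) (G : {group gT}) x :
  x \in G -> [set 1; x] \in P0 G.
Proof.
move=> xG; rewrite P0E !inE eqxx andbT; apply/subsetP => z.
by rewrite !inE => /orP [] /eqP ->.
Qed.

Lemma mulP0 (gT : finGroupType) (G : {group gT}) A B :
  A \in P0 G -> B \in P0 G -> A * B \in P0 G.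
Proof.
rewrite !P0E => /andP [sA a1] /andP [sB b1].
by rewrite mul_subG //= -[1]mulg1 mem_mulg.
Qed.

Lemma fpair (gT : finGroupType) (G : {group gT}) f A x :
  P0_aut G f -> trivial_pullback G f -> A \in P0 G -> x \in G ->
  f (A * [set 1; x]) = f A * [set 1; x].
Proof.
move=> [_ _ _ hom _] tp hA xG.
by rewrite hom ?pairP0 // tp.
Qed.

Lemma fG (gT : finGroupType) (G : {group gT}) f :
  P0_aut G f -> trivial_pullback G f -> f G = G.
Proof.
move=> hf tp.
have GP : (G : {set gT}) \in P0 G by rewrite P0E subxx group1.
have hfG := hf; case: hfG => [inP _ _ _ _].
have := inP _ GP; rewrite P0E => /andP [sB b1].
have eq1 x : x \in G -> f G * [set 1; x] = f G.
  move=> xG; rewrite -(@fpair _ G f G x) //; congr f.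
  apply/eqP; rewrite eqEsubset mulg_subl ?inE ?eqxx // andbT.
  apply/subsetP => z; rewrite mulP2 => /orP [//|]. 
  by move=> h; rewrite -(mulgKV x z) groupM.
apply/eqP; rewrite eqEsubset sB /=; apply/subsetP => x xG.
by rewrite -(eq1 x xG) mulP2 mulgV b1 orbT.
Qed.

Lemma finj (gT : finGroupType) (G : {group gT}) f A B :
  P0_aut G f -> A \in P0 G -> B \in P0 G -> f A = f B -> A = B.
Proof. by move=> [_ inj _ _ _]; apply: inj. Qed.

Lemma fP0 (gT : finGroupType) (G : {group gT}) f A :
  P0_aut G f -> A \in P0 G -> f A \in P0 G.
Proof. by move=> [h _ _ _ _]; apply: h. Qed.

Definition CCb (gT : finGroupType) (G A : {set gT}) :=
  [exists u in G :\: A, [forall v in G :\: A, A * [set 1; v^-1 * u] == A]].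

Lemma core (gT : finGroupType) (G : {group gT}) f A :
  P0_aut G f -> trivial_pullback G f -> A \in P0 G ->
  (forall x, x \in G -> A * [set 1; x] != A -> f (A * [set 1; x]) = A * [set 1; x]) ->
  [\/ f A = A, CCb G A | CCb G (f A)].
Proof.
move=> hf tp hA hyp.
have hB := fP0 hf hA.
have neg X : ~~ CCb G X -> forall u, u \in G :\: X ->
    exists2 v, v \in G :\: X & X * [set 1; v^-1 * u] != X.
  move=> hX u hu.
  case: (boolP [exists v in G :\: X, X * [set 1; v^-1 * u] != X]) => [/exists_inP [v ? ?]|hn].
    by exists v.
  exfalso; move/negP: hX; apply; apply/exists_inP; exists u => //.
  apply/forall_inP => v hv; apply: contraNT hn => hne; apply/exists_inP; exists v => //.
case: (boolP (CCb G A)) => hA'; first by constructor 2.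
case: (boolP (CCb G (f A))) => hB'; first by constructor 3.
constructor 1.
move: (hA) (hB); rewrite !P0E => /andP [sA _] /andP [sB _].
apply/setP => z; case zG: (z \in G); last first.
  by apply/idP/idP => hz; [move: (subsetP sB z hz) | move: (subsetP sA z hz)]; rewrite zG.
apply/idP/idP => hz; apply: contraLR hz => hz.
  have hu : z \in G :\: A by rewrite inE hz zG.
  have [v hv hne] := neg _ hA' z hu.
  move: hv; rewrite inE => /andP [vA vG].
  have xG : v^-1 * z \in G by rewrite groupM ?groupV.
  have e := hyp _ xG hne; rewrite (fpair hf tp hA xG) in e.
  have : z \notin A * [set 1; v^-1 * z].
    by rewrite mulP2 invMg invgK mulgA mulgV mul1g (negPf hz) (negPf vA).
  by rewrite -e mulP2 negb_or => /andP [].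
have hu : z \in G :\: f A by rewrite inE hz zG.
have [v hv hne] := neg _ hB' z hu.
move: hv; rewrite inE => /andP [vB vG].
have xG : v^-1 * z \in G by rewrite groupM ?groupV.
have hne' : A * [set 1; v^-1 * z] != A.
  apply: contraNneq hne => e.
  by rewrite -(@fpair _ G f A) // e.
have e := hyp _ xG hne'; rewrite (fpair hf tp hA xG) in e.
have : z \notin f A * [set 1; v^-1 * z].
  by rewrite mulP2 invMg invgK mulgA mulgV mul1g (negPf hz) (negPf vB).
by rewrite e mulP2 negb_or => /andP [].
Qed.

Lemma CC_cases (gT : finGroupType) (G : {group gT}) A :
  A \in P0 G -> CCb G A ->
  (exists2 x, x \in G & (x != 1) && (A * [set 1; x] == A)) \/
  (exists2 u, (u \in G) && (u != 1) & A = G :\ u).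
Proof.
rewrite P0E => /andP [sA a1] /exists_inP [u].
rewrite inE => /andP [uA uG] /forall_inP hall.
case: (boolP [exists v in G :\: A, v != u]) => [/exists_inP [v hv vu]|hn].
  left; exists (v^-1 * u); first by move: hv; rewrite inE => /andP [_ vG]; rewrite groupM ?groupV.
  by rewrite (hall v hv) andbT -(inj_eq (mulgI v)) mulKVg mulg1 eq_sym.
right; exists u; first by rewrite uG; apply: contraNneq uA => ->.
apply/setP => z; rewrite !inE; apply/idP/idP.
  move=> zA; rewrite (subsetP sA) // andbT; apply: contraTneq zA => ->; exact: uA.
move=> /andP [zu zG]; apply/negPn/negP => zA'.
by move/exists_inP: hn; apply; exists z; rewrite ?inE ?zG ?zA'.
Qed.

Lemma periodic (gT : finGroupType) (G : {group gT}) f A x :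
  abelian G -> P0_aut G f -> trivial_pullback G f ->
  (forall H : {group gT}, H \proper G -> {in P0 H, forall A, f A = A}) ->
  (forall H : {group gT}, H \subset G -> cyclic H -> prime #|H| ->
     {in P0 (G / H), forall B, induced G H f B = B}) ->
  A \in P0 G -> x \in G -> x != 1 -> A * [set 1; x] = A -> f A = A.
Proof.
move=> cGG hf tp hprop hquo hA xG x1 eA.
have [sAG a1] : A \subset G /\ 1 \in A by move: hA; rewrite P0E => /andP [].
have stepx b : b \in A -> b * x \in A.
  by move=> bA; rewrite -eA mulP2 mulgK bA orbT.
have stepn b i : b \in A -> b * x ^+ i \in A.
  elim: i b => [|i IH] b bA; first by rewrite expg0 mulg1.
  by rewrite expgSr mulgA; apply: stepx; apply: IH.
have ox : 1 < #[x] by rewrite order_gt1.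
have pp := pdiv_prime ox.
have [y yx oy] := Cauchy pp (pdiv_dvd #[x]).
set H := <[y]>%G.
have sHx : H \subset <[x]> by rewrite cycle_subG.
have sHG : H \subset G by apply: subset_trans sHx _; rewrite cycle_subG.
have eAH : A * H = A.
  apply/eqP; rewrite eqEsubset mulg_subl ?group1 // andbT.
  apply/subsetP => z /mulsgP [a h aA hH ->].
  by have /cycleP [i ->] := subsetP sHx h hH; apply: stepn.
have cHA : commute H A.
  apply: centC; apply: subset_trans sHG _; apply: subset_trans cGG _; exact: centS.
have nGH : G \subset 'N(H).
  apply: cents_norm; apply: subset_trans cGG _; exact: centS.
case: (boolP (H \proper G)) => pHG; last first.
  have eHG : G \subset H by move: pHG; rewrite properE sHG /= negbK.
  have AG : A = G.
    apply/eqP; rewrite eqEsubset sAG /=; apply/subsetP => z zG.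
    by rewrite -eAH -[z]mul1g mem_mulg // (subsetP eHG).
  by rewrite AG fG.
have HP : (H : {set gT}) \in P0 H by rewrite P0E subxx group1.
have HP' : (H : {set gT}) \in P0 G by rewrite P0E sHG group1.
have fH : f H = H by exact: (hprop _ pHG _ HP).
have hfA := fP0 hf hA.
have [sfAG _] : f A \subset G /\ 1 \in f A by move: hfA; rewrite P0E => /andP [].
have efAH : f A * H = f A.
  by case: hf => [_ _ _ hom _]; rewrite -{1}fH -hom // eAH.
have cHfA : commute H (f A).
  apply: centC; apply: subset_trans sHG _; apply: subset_trans cGG _; exact: centS.
have cycH : cyclic H by apply: cycle_cyclic.
have prH : prime #|H| by rewrite /= -/(order y) oy.
have BP : A / H \in P0 (G / H).
  rewrite P0E quotientS //=.
  by rewrite -(coset_id (group1 H)); apply/imsetP; exists 1; rewrite // inE (subsetP nGH) ?group1.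
have := hquo H sHG cycH prH _ BP.
rewrite /induced.
have -> : G :&: coset H @^-1: (A / H) = A.
  have := quotientK (subset_trans sAG nGH).
  rewrite morphpreE /= => e.
  rewrite -(setIidPl nGH) -setIA.
  rewrite e cHA eAH; exact/setIidPr.
move=> e.
have e2 : f A / H = A / H by rewrite -e /quotient morphimEsub // (subset_trans sfAG nGH).
have := quotientK (subset_trans sfAG nGH).
rewrite e2 quotientK ?(subset_trans sAG nGH) // cHA cHfA eAH efAH.
by move=> <-.
Qed.

Lemma MP0 (gT : finGroupType) (G : {group gT}) g : g != 1 -> G :\ g \in P0 G.
Proof. by move=> g1; rewrite P0E subsetDl !inE eq_sym g1 group1. Qed.

Lemma Mpair (gT : finGroupType) (G : {group gT}) g x :
  x \in G -> x != 1 -> (G :\ g) * [set 1; x] = G.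
Proof.
move=> xG x1; apply/setP => z; rewrite mulP2 !inE.
case zG: (z \in G); last first.
  rewrite !andbF /=; apply/negP => /andP [_ h].
  by move: zG; rewrite -(mulgKV x z) groupM // h.
rewrite groupM ?groupV //= andbT.
case: eqP => // ->; rewrite andbT /=.
by rewrite -(inj_eq (mulgI g^-1)) mulKg mulVg invg_eq1.
Qed.

Lemma Mimg (gT : finGroupType) (G : {group gT}) f g :
  P0_aut G f -> trivial_pullback G f -> g \in G -> g != 1 ->
  exists2 h, (h \in G) && (h != 1) & f (G :\ g) = G :\ h.
Proof.
move=> hf tp gG g1.
have hM := MP0 G g1.
have hB := fP0 hf hM.
have [sB b1] : f (G :\ g) \subset G /\ 1 \in f (G :\ g) by move: hB; rewrite P0E => /andP [].
have ne : f (G :\ g) != G.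
  apply/eqP => e; have : G :\ g = G.
    apply: (finj hf hM); first by rewrite P0E subxx group1.
    by rewrite e fG.
  by move/setP/(_ g); rewrite !inE eqxx gG.
have [h hG hB'] : exists2 h, h \in G & h \notin f (G :\ g).
  apply/exists_inP; move: ne; apply: contraR => /exists_inP hn.
  rewrite eqEsubset sB /=; apply/subsetP => z zG; apply/negPn/negP => zB.
  by apply: hn; exists z.
have cov x : x \in G -> x != 1 -> f (G :\ g) * [set 1; x] = G.
  by move=> xG x1; rewrite -(fpair hf tp hM xG) Mpair // fG.
exists h; first by rewrite hG; apply: contraNneq hB' => ->.
apply/setP => z; rewrite !inE; apply/idP/idP.
  move=> zB; rewrite (subsetP sB) // andbT; apply: contraTneq zB => ->; exact: hB'.
move=> /andP [zh zG]; apply/negPn/negP => zB.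
have xG : z^-1 * h \in G by rewrite groupM ?groupV.
have x1 : z^-1 * h != 1 by rewrite -(inj_eq (mulgI z)) mulKVg mulg1 eq_sym.
have := cov _ xG x1; move/setP/(_ h); rewrite hG mulP2 (negPf hB') /=.
by rewrite invMg invgK mulgA mulgV mul1g (negPf zB).
Qed.

Lemma Wlem (gT : finGroupType) (G : {group gT}) a d :
  a \in G -> d \in G -> d ^+ 2 != 1 ->
  (G :\: [set a * d; a]) * [set 1; d] = G :\ (a * d).
Proof.
move=> aG dG d2.
have d1 : d != 1 by apply: contra d2 => /eqP ->; rewrite expg1n.
apply/setP => z; rewrite mulP2 !inE.
case zG: (z \in G); last first.
  rewrite !andbF /=; apply/negbTE/negP => /andP [_ h].
  by move: zG; rewrite -(mulgKV d z) groupM // h.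
rewrite groupM ?groupV //= !andbT.
case: (eqVneq z (a * d)) => [->|zad] /=.
  by rewrite mulgK eqxx !orbT.
case: (eqVneq z a) => [->|za] //=.
rewrite negb_or; apply/andP; split.
  apply: contra d2 => /eqP e.
  have : d^-1 = d by apply: (mulgI a); rewrite e.
  by move=> e'; rewrite expgS expg1 -{1}e' mulVg.
by rewrite -(inj_eq (mulgI a^-1)) mulKg mulVg invg_eq1.
Qed.

Lemma Mrel (gT : finGroupType) (G : {group gT}) f g g' h h' :
  P0_aut G f -> trivial_pullback G f ->
  g \in G -> g' \in G -> g != 1 -> g' != 1 -> (g'^-1 * g) ^+ 2 != 1 ->
  h \in G -> f (G :\ g) = G :\ h -> f (G :\ g') = G :\ h' ->
  h' = h * g^-1 * g'.
Proof.
move=> hf tp gG g'G g1 g'1 d2 hG eh eh'.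
set d := g'^-1 * g.
have dG : d \in G by rewrite groupM ?groupV.
have e1 : g' * d = g by rewrite /d mulKVg.
have W1 := Wlem g'G dG d2; rewrite e1 in W1.
have d2' : (g^-1 * g') ^+ 2 != 1.
  by rewrite -[g^-1 * g']invgK invMg invgK -/d expgVn invg_eq1.
have dG' : g^-1 * g' \in G by rewrite groupM ?groupV.
have W2 := Wlem gG dG' d2'; rewrite mulKVg setUC in W2.
set W := G :\: [set g; g'] in W1 W2.
have WP : W \in P0 G.
  by rewrite P0E subsetDl !inE group1 andbT negb_or !(eq_sym 1) g1 g'1.
have F1 := fpair hf tp WP dG; rewrite W1 eh in F1.
have F2 := fpair hf tp WP dG'; rewrite W2 eh' in F2.
have hW : h \notin f W by move: F1; move/setP/(_ h); rewrite mulP2 !inE eqxx /= => /esym/norP [].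
have hW' : h * d^-1 \notin f W.
  by move: F1; move/setP/(_ h); rewrite mulP2 !inE eqxx /= => /esym/norP [].
have : h * d^-1 \notin f W * [set 1; g^-1 * g'].
  rewrite mulP2 negb_or hW' /= -[g^-1 * g']invgK invMg invgK -/d.
  by rewrite invgK mulgK.
rewrite -F2 !inE groupM ?groupV // andbT negbK => /eqP <-.
by rewrite /d invMg invgK mulgA.
Qed.

Lemma commG (gT : finGroupType) (G : {group gT}) x y :
  abelian G -> x \in G -> y \in G -> commute x y.
Proof. by move=> cGG xG yG; apply: (centsP cGG). Qed.

Lemma Mfix_odd (gT : finGroupType) (G : {group gT}) f t :
  abelian G -> P0_aut G f -> trivial_pullback G f ->
  t \in G -> t ^+ 2 != 1 ->
  forall g, g \in G -> g != 1 -> f (G :\ g) = G :\ g.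
Proof.
move=> cGG hf tp tG t2.
pose s g := odflt 1 [pick h in G :\: f (G :\ g)].
have sP g : g \in G -> g != 1 -> [/\ s g \in G, s g != 1 & f (G :\ g) = G :\ s g].
  move=> gG g1; have [h /andP [hG h1] eh] := Mimg hf tp gG g1.
  have -> : s g = h.
    rewrite /s eh; case: pickP => [h' | none] /=.
      by rewrite !inE => /andP []; rewrite negb_and negbK => /orP [/eqP //|]; move=> /negPf ->.
    by have := none h; rewrite !inE eqxx hG.
  by [].
pose c g := s g * g^-1.
have cG g : g \in G -> g != 1 -> c g \in G.
  by move=> gG g1; have [sG _ _] := sP g gG g1; rewrite groupM ?groupV.
have rel g g' : g \in G -> g' \in G -> g != 1 -> g' != 1 -> (g'^-1 * g) ^+ 2 != 1 -> c g' = c g.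
  move=> gG g'G g1 g'1 d2.
  have [sG _ e] := sP g gG g1; have [_ _ e'] := sP g' g'G g'1.
  by rewrite /c (Mrel hf tp gG g'G g1 g'1 d2 sG e e') mulgK.
have t1 : t != 1 by apply: contra t2 => /eqP ->; rewrite expg1n.
have conn g g' : g \in G -> g' \in G -> g != 1 -> g' != 1 -> c g' = c g.
  move=> gG g'G g1 g'1.
  case: (eqVneq ((g'^-1 * g) ^+ 2) 1) => e; last exact: rel.
  have dG : g'^-1 * g \in G by rewrite groupM ?groupV.
  suff : exists k, [/\ k \in G, k != 1, (k^-1 * g) ^+ 2 != 1 & (g'^-1 * k) ^+ 2 != 1].
    by move=> [k [kG k1 r1 r2]]; rewrite (rel k g' kG g'G k1 g'1 r2) (rel g k gG kG g1 k1 r1).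
  case: (eqVneq (g * t) 1) => gt.
    exists (g * t^-1); split.
    - by rewrite groupM ?groupV.
    - apply: contra t2 => /eqP e2.
      have et : t^-1 = t by apply: (mulgI g); rewrite e2 gt.
      by rewrite expgS expg1 -{1}et mulVg.
    - by rewrite invMg invgK mulgVK.
    - rewrite mulgA expgMn ?e ?mul1g ?expgVn ?invg_eq1 //.
      by apply: commG cGG dG _; rewrite groupV.
  exists (g * t); split.
  - by rewrite groupM.
  - by [].
  - by rewrite invMg mulgVK expgVn invg_eq1.
  - by rewrite mulgA expgMn ?e ?mul1g //; apply: commG cGG dG tG.
move=> g gG g1.
have [sG _ e] := sP g gG g1.
suff : c g = 1 by rewrite e => /eqP; rewrite -eq_mulgV1 => /eqP ->.
apply/eqP/negP => /negP cg1.
have kG : (c g)^-1 \in G by rewrite groupV cG.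
have k1 : (c g)^-1 != 1 by rewrite invg_eq1.
have := conn g _ gG kG g1 k1.
rewrite {1}/c => /(congr1 (fun z => z * (c g)^-1)).
rewrite invgK mulgK mulgV.
have [_ sk1 _] := sP _ kG k1.
by move=> e2; move: sk1; rewrite e2 eqxx.
Qed.

Lemma I22_abelem : 2.-abelem [set: 'I_2 * 'I_2].
Proof.
apply/abelemP => //; split.
  apply/centsP => x _ y _. 
  move: x y => [[[|[|m]] i] [[|[|n]] j]] [[[|[|m']] i'] [[|[|n']] j']] //; apply/eqP => //.
move=> [[[|[|m]] i] [[|[|n]] j]] _ //; apply/eqP => //.
Qed.

Lemma I22_card : #|[set: 'I_2 * 'I_2]| = 4.
Proof. by rewrite cardsT card_prod card_ord. Qed.

Lemma Mfix_two (gT : finGroupType) (G : {group gT}) f :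
  abelian G -> ~ (G \isog [set: 'I_2 * 'I_2]) ->
  P0_aut G f -> trivial_pullback G f ->
  (forall H : {group gT}, H \proper G -> {in P0 H, forall A, f A = A}) ->
  (forall H : {group gT}, H \subset G -> cyclic H -> prime #|H| ->
     {in P0 (G / H), forall B, induced G H f B = B}) ->
  (forall t, t \in G -> t ^+ 2 = 1) ->
  forall a, a \in G -> a != 1 -> f (G :\ a) = G :\ a.
Proof.
move=> cGG niso hf tp hprop hquo ex2 a aG a1.
have invE x : x \in G -> x^-1 = x.
  move=> xG; apply: (mulgI x); rewrite mulgV; have := ex2 x xG.
  by rewrite expgS expg1.
case: (boolP [exists b in G, (b != 1) && (b != a)]); last first.
  move=> hn; have -> : G :\ a = 1.
    apply/setP => z; rewrite !inE; apply/idP/idP.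
      move=> /andP [za zG]; apply/negPn/negP => z1.
      by move/exists_inP: hn; apply; exists z; rewrite // z1 za.
    by move=> /eqP ->; rewrite group1 andbT eq_sym.
  by case: hf.
case/exists_inP => b bG /andP [b1 ba].
have abG : a * b \in G by rewrite groupM.
have ab1 : a * b != 1.
  apply: contra ba => /eqP e; apply/eqP.
  by rewrite -(mulKg a b) e mulg1 invE.
have aba : a * b != a by rewrite -{2}[a]mulg1 (inj_eq (mulgI a)).
have abb : a * b != b by rewrite -{2}[b]mul1g (inj_eq (mulIg b)).
set K := (<[a]> <*> <[b]>)%G.
have aK : a \in K by apply: (subsetP (joing_subl _ _)); apply: cycle_id.
have bK : b \in K by apply: (subsetP (joing_subr _ _)); apply: cycle_id.
have sKG : K \subset G by rewrite join_subG !cycle_subG aG bG.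
have oa : #[a] <= 2 by apply: dvdn_leq => //; rewrite order_dvdn ex2.
have ob : #[b] <= 2 by apply: dvdn_leq => //; rewrite order_dvdn ex2.
have sa : <[a]> \subset G by rewrite cycle_subG.
have sb : <[b]> \subset G by rewrite cycle_subG.
have cKab : commute <[a]> <[b]>.
  apply: centC; apply: subset_trans sa _; apply: subset_trans cGG _; exact: centS sb.
have cardK : #|K| <= 4.
  have := mul_cardG <[a]> <[b]>; rewrite -comm_joingE // -/K.
  move=> e; apply: leq_trans (_ : #|K| * #|<[a]> :&: <[b]>| <= 4).
    by rewrite leq_pmulr // cardG_gt0.
  by rewrite -e (leq_mul oa ob).
have cardG3 : 3 <= #|G|.
  have : b |: [set 1; a] \subset G.
    by apply/subsetP => z; rewrite !inE => /or3P [] /eqP ->.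
  move/subset_leq_card; rewrite cardsU1 cards2 !inE negb_or b1 ba eq_sym a1.
  by [].
have dvd2 : 2 %| #|G|.
  have : #[a] = 2.
    by apply/eqP; rewrite eqn_leq oa order_gt1 a1.
  by move=> <-; apply: order_dvdG.
have cardG4 : #|G| != 4.
  apply/negP => /eqP e4; apply: niso.
  have elG : 2.-abelem G by apply/abelemP => //; split.
  by rewrite (isog_abelem_card _ elG) I22_abelem I22_card e4.
have ltKG : #|K| < #|G|.
  apply: leq_ltn_trans cardK _.
  move: cardG3 dvd2 cardG4; case: #|G| => [|[|[|[|[|n]]]]] //.
have pK : K \proper G by rewrite properEcard sKG ltKG.
set Y := [set 1; a * b; b].
have YP : Y \in P0 K.
  rewrite P0E !inE eqxx /= andbT; apply/subsetP => z.
  by rewrite !inE => /orP [/orP [] | ] /eqP ->; rewrite ?group1 ?groupM.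
have fY : f Y = Y by exact: (hprop _ pK _ YP).
have YG : Y \in P0 G by move: YP; rewrite !P0E => /andP [sY ->]; rewrite (subset_trans sY sKG).
set V := G :\: [set a; b; a * b].
have VP : V \in P0 G.
  rewrite P0E subsetDl !inE group1 andbT !negb_or.
  by rewrite !(eq_sym 1) a1 b1 ab1.
have aa : a * a = 1 by have := ex2 a aG; rewrite expgS expg1.
have eVY : V * Y = G :\ a.
  apply/setP => z; rewrite in_setD1; apply/idP/idP.
    move/mulsgP => [v y hv hy ->].
    have vG : v \in G by move: hv; rewrite inE => /andP [].
    have yG : y \in G by move: YG; rewrite P0E => /andP [/subsetP sY _]; apply: sY.
    rewrite groupM // andbT.
    move: hv; rewrite !inE => /andP [hv _].
    move: hy; rewrite !inE => /orP [/orP [] | ] /eqP ->.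
    - by rewrite mulg1; apply: contra hv => ->.
    - apply: contra hv => /eqP e.
      have : v = b by rewrite -(mulgK (a * b) v) e invE // mulgA aa mul1g.
      by move=> ->; rewrite eqxx orbT.
    - apply: contra hv => /eqP e.
      have : v = a * b by rewrite -(mulgK b v) e invE.
      by move=> ->; rewrite eqxx !orbT.
  move=> /andP [za zG]; apply/mulsgP.
  case: (boolP (z \in V)) => zV; first by exists z 1; rewrite ?mulg1 // !inE eqxx.
  move: zV; rewrite !inE zG andbT negbK (negPf za) /= => /orP [] /eqP ->.
    by exists 1 b; rewrite ?mul1g // !inE ?eqxx ?orbT // group1 andbT !negb_or !(eq_sym 1) a1 b1 ab1.
  by exists 1 (a * b); rewrite ?mul1g // !inE ?eqxx ?orbT // group1 andbT !negb_or !(eq_sym 1) a1 b1 ab1.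
have aV : a \notin V by rewrite !inE eqxx.
have bV : b \notin V by rewrite !inE eqxx orbT.
have GP : (G : {set gT}) \in P0 G by rewrite P0E subxx group1.
have fV : f V = V.
  have hyp x : x \in G -> V * [set 1; x] != V -> f (V * [set 1; x]) = V * [set 1; x].
    move=> xG ne.
    have x1 : x != 1.
      apply: contraNneq ne => ->; apply/eqP/setP => z; rewrite mulP2 invg1 mulg1 orbb //.
    apply: (periodic cGG hf tp hprop hquo (mulP0 VP (pairP0 xG)) xG x1).
    apply/setP => z; rewrite !mulP2 -mulgA -invMg.
    have -> : x * x = 1 by have := ex2 x xG; rewrite expgS expg1.
    rewrite invg1 mulg1.
    by case: (z \in V); case: (z * x^-1 \in V).
  case: (core hf tp VP hyp) => [//|hC|hC].
    case: (CC_cases VP hC) => [[x xG /andP [x1 /eqP e]] | [u /andP [uG u1] e]].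
      exact: (periodic cGG hf tp hprop hquo VP xG x1 e).
    exfalso; move: aV bV; rewrite e !inE aG bG !andbT !negbK => /eqP ea /eqP eb.
    by move: ba; rewrite ea eb eqxx.
  have hfV := fP0 hf VP.
  case: (CC_cases hfV hC) => [[x xG /andP [x1 /eqP e]] | [w /andP [wG w1] e]].
    have := periodic cGG hf tp hprop hquo hfV xG x1 e.
    exact: (finj hf hfV VP).
  exfalso.
  have e1 := fpair hf tp VP abG; rewrite e Mpair // -(fG hf tp) in e1.
  have e2 := finj hf (mulP0 VP (pairP0 abG)) GP e1.
  move: aG; rewrite -e2 mulP2 (negPf aV) /= invE // mulgA aa mul1g.
  exact/negP.
case: hf => [inP inj sur hom f1].
by rewrite -eVY hom // fV fY.
Qed.

Unset Implicit Arguments.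
Unset Strict Implicit.

Theorem proposition3p3 (gT : finGroupType) (G : {group gT})
    (f : {set gT} -> {set gT}) :
  abelian G ->
  G :!=: 1 ->
  ~ (G \isog [set: 'I_2 * 'I_2]) ->
  P0_aut G f ->
  trivial_pullback G f ->
  (forall H : {group gT}, H \proper G -> {in P0 H, forall A, f A = A}) ->
  (forall H : {group gT}, H \subset G -> cyclic H -> prime #|H| ->
     {in P0 (G / H), forall B, induced G H f B = B}) ->
  {in P0 G, forall A, f A = A}.
Proof.
move=> cGG G1 niso hf tp hprop hquo.
have Mfix : forall g, g \in G -> g != 1 -> f (G :\ g) = G :\ g.
  case: (boolP [exists t in G, t ^+ 2 != 1]) => [/exists_inP [t tG t2] | hn].
    exact: (Mfix_odd cGG hf tp tG t2).
  apply: (Mfix_two cGG niso hf tp hprop hquo) => t tG; apply/eqP.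
  by apply: contraNT hn => h; apply/exists_inP; exists t.
move=> A hA.
have [n] := ubnP #|G :\: A|; elim: n A hA => // n IH A hA hn.
have hyp x : x \in G -> A * [set 1; x] != A -> f (A * [set 1; x]) = A * [set 1; x].
  move=> xG ne; have hAx := mulP0 hA (pairP0 xG); apply: IH => //.
  apply: leq_trans (proper_card _) _; last by rewrite -ltnS; exact: hn.
  have sAAx : A \subset A * [set 1; x] by rewrite mulg_subl // !inE eqxx.
  apply/properP; split; first exact: setDS.
  have [z zAx zA] : exists2 z, z \in A * [set 1; x] & z \notin A.
    apply/exists_inP; move: ne; apply: contraR => /exists_inP hn'.
    rewrite eqEsubset sAAx andbT; apply/subsetP => z zAx; apply/negPn/negP => zA.
    by apply: hn'; exists z.
  have zG : z \in G by move: hAx; rewrite P0E => /andP [/subsetP s _]; apply: s.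
  by exists z; rewrite !inE ?zA ?zAx ?zG.
case: (core hf tp hA hyp) => [//|hC|hC].
  case: (CC_cases hA hC) => [[x xG /andP [x1 /eqP e]] | [u /andP [uG u1] e]].
    exact: (periodic cGG hf tp hprop hquo hA xG x1 e).
  by rewrite e Mfix.
have hfA := fP0 hf hA.
case: (CC_cases hfA hC) => [[x xG /andP [x1 /eqP e]] | [w /andP [wG w1] e]].
  have := periodic cGG hf tp hprop hquo hfA xG x1 e.
  exact: (finj hf hfA hA).
have eA : A = G :\ w by apply: (finj hf hA (MP0 G w1)); rewrite Mfix // e.
by rewrite e eA.
Qed.
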